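(* Let $n$ be a nonnegative integer and let $x$ be a complex number such that no denominator below vanishes. Then \[ \sum_{k=0}^{n}(-1)^k\binom{n}{k} \frac{\binom{\frac{x}{2}+k}{k}^2\binom{x-\frac{1}{2}+k}{k}} {\binom{\frac{x-1}{2}+k}{k}^2\binom{x-\frac{1}{2}+n+k}{k}} \frac{1+2x+4k}{1+2x+2n+2k}H_{2k}^2(x) =\frac{1}{4}\frac{\binom{x-\frac{1}{2}+n}{n}\binom{-\frac{3}{2}+n}{n}} {\binom{\frac{x-1}{2}+n}{n}^2} \big\{\big[H_n(\tfrac{x-1}{2})-H_n(-\tfrac{3}{2})\big]^2-H_{n}^{\langle2\rangle}(-\tfrac{3}{2})\big\}, \] where $H_{2k}^2(x)$ denotes $(H_{2k}(x))^2$.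
   Context: For complex $z$ and a nonnegative integer $k$, $\binom{z}{k}=\frac{z(z-1)\cdots(z-k+1)}{k!}$ (with $\binom{z}{0}=1$). For complex $x$ and nonnegative integer $m$, $H_0(x)=0$, $H_m(x)=\sum_{j=1}^m\frac{1}{x+j}$, $H_0^{\langle2\rangle}(x)=0$ and $H_m^{\langle2\rangle}(x)=\sum_{j=1}^m\frac{1}{(x+j)^2}$ for $m\ge1$. The parameter $x$ is assumed to be such that all denominators are nonzero. *)

(* Defs.v *)
From mathcomp Require Import all_boot all_order all_algebra.
From mathcomp Require Import reals complex.
Set Implicit Arguments. Unset Strict Implicit. Unset Printing Implicit Defensive.
Import Order.TTheory GRing.Theory Num.Theory.
Local Open Scope ring_scope.

Definition gbinom (F : fieldType) (z : F) (k : nat) : F :=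
  (\prod_(i < k) (z - i%:R)) / (k`!)%:R.

Definition Hsum (F : fieldType) (m : nat) (x : F) : F :=
  \sum_(1 <= j < m.+1) (x + j%:R)^-1.

Definition Hsum2 (F : fieldType) (m : nat) (x : F) : F :=
  \sum_(1 <= j < m.+1) ((x + j%:R) ^+ 2)^-1.

(* Main.v *)
Require Import Defs.
From HB Require Import structures.
From mathcomp Require Import all_boot all_order all_algebra.
From mathcomp Require Import reals complex.
From mathcomp Require Import ring zify.
Set Implicit Arguments. Unset Strict Implicit. Unset Printing Implicit Defensive.
Import Order.TTheory GRing.Theory Num.Theory.
Local Open Scope ring_scope.

Section DualDef.
Variable R : comUnitRingType.
Definition dual := (R * R)%type.
HB.instance Definition _ := Choice.on dual.
HB.instance Definition _ := GRing.Zmodule.on dual.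
Definition dmul (x y : dual) : dual := (x.1 * y.1, x.1 * y.2 + x.2 * y.1).
Definition done : dual := (1, 0).
Lemma dmulA : associative dmul.
Proof. by move=> [a b] [c d] [e f]; rewrite /dmul /=; congr (_,_); ring. Qed.
Lemma dmulC : commutative dmul.
Proof. by move=> [a b] [c d]; rewrite /dmul /=; congr (_,_); ring. Qed.
Lemma dmul1 : left_id done dmul.
Proof. by move=> [a b]; rewrite /dmul /=; congr (_,_); ring. Qed.
Lemma dmulD : left_distributive dmul +%R.
Proof. move=> [a b] [c d] [e f]; rewrite /dmul /=; apply/pair_equal_spec; split => /=; ring. Qed.
Lemma done_neq0 : done != 0.
Proof. apply/eqP => -[] /eqP; by rewrite oner_eq0. Qed.
HB.instance Definition _ := GRing.Zmodule_isComNzRing.Build dual dmulA dmulC dmul1 dmulD done_neq0.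
Definition dunit : {pred dual} := fun x => x.1 \is a GRing.unit.
Definition dinv (x : dual) : dual :=
  if x.1 \is a GRing.unit then (x.1^-1, - (x.2 * x.1^-1 ^+ 2)) else x.
Lemma dmulVx : {in dunit, left_inverse 1 dinv *%R}.
Proof.
move=> [a b] ua; have {}ua : a \is a GRing.unit := ua; rewrite /dinv /= ua.
rewrite /GRing.mul /= /dmul /=; congr (_,_); first by rewrite mulVr.
change (a^-1 * b + - (b * (a^-1 ^+ 2)) * a = 0).
by rewrite expr2 mulNr -!mulrA mulVr // mulr1 mulrC subrr.
Qed.
Lemma dunitPl : forall x y : dual, y * x = 1 -> dunit x.
Proof. by move=> [a b] [c d] [] h _; rewrite /dunit /=; apply/(unitrPr); exists c; rewrite mulrC. Qed.
Lemma dinv_out : {in [predC dunit], dinv =1 id}.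
Proof. move=> [a b] h; have {}h : a \isn't a GRing.unit := h. by rewrite /dinv /= (negbTE h). Qed.
HB.instance Definition _ := GRing.ComNzRing_hasMulInverse.Build dual dmulVx dunitPl dinv_out.
End DualDef.

Section Dougall.
Variable R : comUnitRingType.
Definition poch (z : R) (k : nat) : R := \prod_(i < k) (z + i%:R).

Lemma poch0 z : poch z 0 = 1.
Proof. by rewrite /poch big_ord0. Qed.
Lemma pochS z k : poch z k.+1 = poch z k * (z + k%:R).
Proof. by rewrite /poch big_ord_recr. Qed.
Lemma pochSl z k : poch z k.+1 = z * poch (z + 1) k.
Proof.
elim: k z => [|k IH] z; first by rewrite pochS !poch0 addr0 mul1r mulr1.
by rewrite pochS IH pochS -natr1; ring.
Qed.
Lemma poch_unit z k : (forall i, (i < k)%N -> z + i%:R \is a GRing.unit) ->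
  poch z k \is a GRing.unit.
Proof.
elim: k => [|k IH] h; first by rewrite poch0 unitr1.
by rewrite pochS unitrM IH ?h // => i hi; apply: h; apply: ltnW.
Qed.

Definition c2 (a b c n : R) := - 2%:R * 1 - 4%:R * n - 2%:R * n^+2 + c + c*n + b + b*n + a + a*n - a*c - a*b + a^+2.
Definition c1 (a b c n : R) := 6%:R * 1 + 18%:R * n + 18%:R * n^+2 + 6%:R * n^+3 - 5%:R * c - 10%:R * c*n - 5%:R * c*n^+2 + c^+2 + c^+2*n - 5%:R * b - 10%:R * b*n - 5%:R * b*n^+2 + 2%:R * b*c + 2%:R * b*c*n + b^+2 + b^+2*n - 3%:R * a - 6%:R * a*n - 3%:R * a*n^+2 + 4%:R * a*c + 4%:R * a*c*n - a*c^+2 + 4%:R * a*b + 4%:R * a*b*n - 2%:R * a*b*c - a*b^+2 - 3%:R * a^+2 - 3%:R * a^+2*n + a^+2*c + a^+2*b.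
Definition c0 (a b c n : R) := - 5%:R * 1 - 20%:R * n - 30%:R * n^+2 - 20%:R * n^+3 - 5%:R * n^+4 + 6%:R * c + 18%:R * c*n + 18%:R * c*n^+2 + 6%:R * c*n^+3 - 2%:R * c^+2 - 4%:R * c^+2*n - 2%:R * c^+2*n^+2 + 6%:R * b + 18%:R * b*n + 18%:R * b*n^+2 + 6%:R * b*n^+3 - 5%:R * b*c - 10%:R * b*c*n - 5%:R * b*c*n^+2 + b*c^+2 + b*c^+2*n - 2%:R * b^+2 - 4%:R * b^+2*n - 2%:R * b^+2*n^+2 + b^+2*c + b^+2*c*n + 2%:R * a + 6%:R * a*n + 6%:R * a*n^+2 + 2%:R * a*n^+3 - 4%:R * a*c - 8%:R * a*c*n - 4%:R * a*c*n^+2 + 2%:R * a*c^+2 + 2%:R * a*c^+2*n - 4%:R * a*b - 8%:R * a*b*n - 4%:R * a*b*n^+2 + 4%:R * a*b*c + 4%:R * a*b*c*n - a*b*c^+2 + 2%:R * a*b^+2 + 2%:R * a*b^+2*n - a*b^+2*c + 3%:R * a^+2 + 6%:R * a^+2*n + 3%:R * a^+2*n^+2 - 2%:R * a^+2*c - 2%:R * a^+2*c*n - 2%:R * a^+2*b - 2%:R * a^+2*b*n + a^+2*b*c.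
Definition Pp (a b c n k : R) := c2 a b c n * k^+2 + c1 a b c n * k + c0 a b c n.
Definition Dd (a b c n : R) := (1+a-b-c+n) * (1+a-b+n) * (1+a-c+n).
Definition Mm (a b c n : R) := (a-n-1) * (1+a-b-c+2%:R*n) * (2%:R+a-b-c+2%:R*n).

Lemma core0 (a b c n : R) : Dd a b c n * (a-n-1) - Mm a b c n * (a-n) = Pp a b c n 1.
Proof. rewrite /Dd /Mm /Pp /c2 /c1 /c0; ring. Qed.

Lemma core (a b c n k Ck Cj : R) : k * Ck = (n - k + 1) * Cj ->
  k * ((a-n-1+2%:R*k)*(Ck+Cj)*(a-n-1)*(b-n-1)*(c-n-1) * Dd a b c n
   - Mm a b c n*(a-n+2%:R*k)*Ck*(a-n+k-1)*(b-n+k-1)*(c-n+k-1)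
   - Ck*(a-n+k-1)*(b-n+k-1)*(c-n+k-1)*Pp a b c n (k+1)
   - Cj*Pp a b c n k*(a+k)*(a-b+k)*(a-c+k)) = 0.
Proof.
move=> h.
set A := (a-n-1+2%:R*k)*(a-n-1)*(b-n-1)*(c-n-1) * Dd a b c n
   - Mm a b c n*(a-n+2%:R*k)*(a-n+k-1)*(b-n+k-1)*(c-n+k-1)
   - (a-n+k-1)*(b-n+k-1)*(c-n+k-1)*Pp a b c n (k+1).
set B := (a-n-1+2%:R*k)*(a-n-1)*(b-n-1)*(c-n-1) * Dd a b c n
   - Pp a b c n k*(a+k)*(a-b+k)*(a-c+k).
have -> : k * ((a-n-1+2%:R*k)*(Ck+Cj)*(a-n-1)*(b-n-1)*(c-n-1) * Dd a b c n
   - Mm a b c n*(a-n+2%:R*k)*Ck*(a-n+k-1)*(b-n+k-1)*(c-n+k-1)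
   - Ck*(a-n+k-1)*(b-n+k-1)*(c-n+k-1)*Pp a b c n (k+1)
   - Cj*Pp a b c n k*(a+k)*(a-b+k)*(a-c+k)) = (k * Ck) * A + Cj * (k * B).
  by rewrite /A /B; ring.
rewrite h /A /B /Pp /Dd /Mm /c2 /c1 /c0; ring.
Qed.

Lemma inv_split (x e : R) : x \is a GRing.unit -> e \is a GRing.unit ->
  x^-1 = e * (x * e)^-1.
Proof. by move=> ux ue; rewrite invrM // mulrA mulrV // mul1r. Qed.

Variables (a b c : R) (N : nat).
Hypothesis ha : forall j, (j <= N)%N -> a + j%:R \is a GRing.unit.
Hypothesis hb : forall j, (j < N)%N -> 1+a-b + j%:R \is a GRing.unit.
Hypothesis hc : forall j, (j < N)%N -> 1+a-c + j%:R \is a GRing.unit.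
Hypothesis hd : forall n, (n < N)%N -> 1+a-b-c + n%:R \is a GRing.unit.
Hypothesis hk : forall k, (0 < k)%N -> (k%:R : R) \is a GRing.unit.

Definition U (n k : nat) := (-1)^+k * ('C(n,k))%:R
  * (poch (a - n%:R) k * poch (b - n%:R) k * poch (c - n%:R) k)
  * (poch a k.+1 * poch (1+a-b) k * poch (1+a-c) k)^-1.
Definition T n k := (a - n%:R + 2%:R * k%:R) * U n k.
Definition G n k := match k with 0 => 0 | j.+1 =>
  U n j * Pp a b c n%:R k%:R * (Dd a b c n%:R)^-1 end.
Definition W n := poch (a - n%:R) n * poch (1+a-b-c+n%:R) n
  * (poch (1+a-b) n * poch (1+a-c) n)^-1.

Lemma Dk_unit k : (k <= N)%N ->
  poch a k.+1 * poch (1+a-b) k * poch (1+a-c) k \is a GRing.unit.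
Proof.
move=> hkN; rewrite !unitrM !poch_unit // => i hi.
- by apply: hc; apply: leq_trans hi hkN.
- by apply: hb; apply: leq_trans hi hkN.
- by apply: ha; apply: leq_trans hkN.
Qed.

Lemma step n k : (n < N)%N -> (k <= n.+1)%N ->
  T n.+1 k - Mm a b c n%:R * (Dd a b c n%:R)^-1 * T n k = G n k.+1 - G n k.
Proof.
move=> hn hkn.
have uD : Dd a b c n%:R \is a GRing.unit by rewrite /Dd !unitrM hd ?hb ?hc.
set Di := (Dd a b c n%:R)^-1.
have hDi : Dd a b c n%:R * Di = 1 by rewrite /Di mulrV.

case: k hkn => [|j] hj.
  rewrite /T /U /G -/Di !poch0 bin0 expr0 pochS poch0 !mul1r !mulr1 addr0.
  have ua : a \is a GRing.unit by have := ha (leq0n N); rewrite addr0.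
  transitivity (a^-1 * Di * (Dd a b c n%:R * (a-n%:R-1) - Mm a b c n%:R * (a-n%:R))
      + a^-1 * (a-n%:R-1) * (1 - Dd a b c n%:R * Di)).
    rewrite bin0 -natr1; ring.
  rewrite core0 hDi subrr mulr0 addr0 /U !poch0 bin0 expr0 pochS poch0 addr0 !mul1r !mulr1 -/Di; ring.
have uj : (j.+1%:R : R) \is a GRing.unit by apply: hk.
have hjN : (j <= N)%N by lia.
have uDj : poch a j.+1 * poch (1+a-b) j * poch (1+a-c) j \is a GRing.unit.
  by apply: Dk_unit.
have ue : (a + j.+1%:R) * (1+a-b+j%:R) * (1+a-c+j%:R) \is a GRing.unit.
  by rewrite !unitrM ha ?hb ?hc //; apply: leq_trans hn.
set X := (-1)^+j * (poch (a - n%:R) j * poch (b - n%:R) j * poch (c - n%:R) j).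
set Zk := (poch a j.+2 * poch (1+a-b) j.+1 * poch (1+a-c) j.+1)^-1.
have eDj : (poch a j.+1 * poch (1+a-b) j * poch (1+a-c) j)^-1
    = (a + j.+1%:R) * (1+a-b+j%:R) * (1+a-c+j%:R) * Zk.
  rewrite (inv_split uDj ue) /Zk [in RHS](pochS a j.+1) (pochS (1+a-b)) (pochS (1+a-c)).
  by congr (_ * _^-1); ring.
set Ck := ('C(n, j.+1))%:R : R.
set Cj := ('C(n, j))%:R : R.
have hbin : j.+1%:R * Ck = (n%:R - j.+1%:R + 1) * Cj.
  have : (j.+1 * 'C(n, j.+1))%:R = ((n - j) * 'C(n,j))%:R :> R by rewrite mul_bin_left.
  rewrite !natrM natrB // -/Ck -/Cj => ->; rewrite -natr1; ring.
have ea : a - n.+1%:R + 1 = a - n%:R by rewrite -natr1; ring.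
have eb : b - n.+1%:R + 1 = b - n%:R by rewrite -natr1; ring.
have ec : c - n.+1%:R + 1 = c - n%:R by rewrite -natr1; ring.
have eT1 : T n.+1 j.+1 = - X * ((a - n%:R - 1 + 2%:R * j.+1%:R) * (Ck + Cj)
    * (a-n%:R-1) * (b-n%:R-1) * (c-n%:R-1)) * Zk.
  rewrite /T /U binS natrD -/Ck -/Cj (pochSl (a - _)) (pochSl (b - _)) (pochSl (c - _)).
  by rewrite ea eb ec -/Zk /X exprS -natr1; ring.
have eT0 : T n j.+1 = - X * ((a - n%:R + 2%:R * j.+1%:R) * Ck
    * (a-n%:R+j%:R) * (b-n%:R+j%:R) * (c-n%:R+j%:R)) * Zk.
  rewrite /T /U -/Ck (pochS (a - _)) (pochS (b - _)) (pochS (c - _)).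
  by rewrite -/Zk /X exprS; ring.
have eG1 : G n j.+2 = - X * (Ck * (a-n%:R+j%:R) * (b-n%:R+j%:R) * (c-n%:R+j%:R)
    * Pp a b c n%:R (j.+1%:R + 1)) * Zk * Di.
  rewrite /G /U -/Ck -/Di (pochS (a - _)) (pochS (b - _)) (pochS (c - _)).
  by rewrite -/Zk /X exprS natr1; ring.
have eG0 : G n j.+1 = X * (Cj * Pp a b c n%:R j.+1%:R
    * ((a + j.+1%:R) * (1+a-b+j%:R) * (1+a-c+j%:R))) * Zk * Di.
  by rewrite /G /U -/Cj -/Di eDj /X; ring.
rewrite eT1 eT0 eG1 eG0.
have hE := core a b c hbin.
set E := (X in _ * X = 0) in hE.
have {}hE : E = 0 by apply: (mulrI uj); rewrite mulr0.
apply/eqP; rewrite -subr_eq0; apply/eqP.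
transitivity (- X * Zk * Di * E - X * ((a - n%:R - 1 + 2%:R * j.+1%:R) * (Ck + Cj)
    * (a-n%:R-1) * (b-n%:R-1) * (c-n%:R-1)) * Zk * (1 - Dd a b c n%:R * Di)).
  by rewrite /E; ring.
by rewrite hE hDi subrr !mulr0 subr0.
Qed.

Lemma Wstep n : (n < N)%N -> Mm a b c n%:R * (Dd a b c n%:R)^-1 * W n = W n.+1.
Proof.
move=> hn.
have ug := hd hn; have uB := hb hn; have uC := hc hn.
have upB : poch (1+a-b) n \is a GRing.unit.
  by apply: poch_unit => i hi; apply: hb; apply: ltn_trans hn.
have upC : poch (1+a-c) n \is a GRing.unit.
  by apply: poch_unit => i hi; apply: hc; apply: ltn_trans hn.
have uQ : poch (1+a-b) n * poch (1+a-c) n \is a GRing.unit by rewrite unitrM upB upC.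
have e1 : poch (a - n.+1%:R) n.+1 = (a - n%:R - 1) * poch (a - n%:R) n.
  rewrite pochSl; congr (_ * _); first by rewrite -natr1; ring.
  by congr poch; rewrite -natr1; ring.
have e2 : poch (1+a-b-c+n.+1%:R) n.+1 = poch (1+a-b-c+n%:R) n * (1+a-b-c+n%:R + n%:R)
   * (1+a-b-c+n%:R + n%:R + 1) * (1+a-b-c+n%:R)^-1.
  have h1 : (1+a-b-c+n%:R) * poch (1+a-b-c+n%:R+1) n
     = poch (1+a-b-c+n%:R) n * (1+a-b-c+n%:R + n%:R) by rewrite -pochSl pochS.
  have -> : 1+a-b-c+n.+1%:R = 1+a-b-c+n%:R + 1 by rewrite -natr1; ring.
  rewrite pochS.
  have -> : poch (1+a-b-c+n%:R+1) n = (1+a-b-c+n%:R)^-1 * (poch (1+a-b-c+n%:R) n * (1+a-b-c+n%:R + n%:R)).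
    by rewrite -h1 mulKr.
  ring.
have e3 : (poch (1+a-b) n.+1 * poch (1+a-c) n.+1)^-1 = (poch (1+a-b) n * poch (1+a-c) n)^-1
    * (1+a-b+n%:R)^-1 * (1+a-c+n%:R)^-1.
  rewrite !pochS.
  have -> : poch (1+a-b) n * (1+a-b+n%:R) * (poch (1+a-c) n * (1+a-c+n%:R))
     = (poch (1+a-b) n * poch (1+a-c) n) * ((1+a-b+n%:R) * (1+a-c+n%:R)) by ring.
  rewrite !invrM ?unitrM ?uB ?uC ?upB ?upC //; ring.
rewrite /W /Dd /Mm e1 e2 e3 !invrM ?unitrM ?ug ?uB //.
rewrite -natr1; ring.
Qed.

Theorem dougall n : (n <= N)%N -> \sum_(k < n.+1) T n k = W n.
Proof.
elim: n => [|n IH] hn.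
  have ua : a \is a GRing.unit by have := ha (leq0n N); rewrite addr0.
  rewrite big_ord1 /T /U /W !poch0 bin0 expr0 pochS poch0 subr0 mulr0 !addr0 !mul1r !mulr1.
  by rewrite invr1 mulrV.
have hn' : (n < N)%N by [].
set mu := Mm a b c n%:R * (Dd a b c n%:R)^-1.
have tel : \sum_(k < n.+2) (T n.+1 k - mu * T n k) = G n n.+2 - G n 0.
  rewrite -(big_mkord xpredT (fun k => T n.+1 k - mu * T n k)).
  apply: telescope_sumr_eq => // k /andP [_ hk2].
  by rewrite step.
have hG2 : G n n.+2 = 0 by rewrite /G /U bin_small // mulr0n mulr0 !mul0r.
have hT0 : T n n.+1 = 0 by rewrite /T /U bin_small // mulr0n mulr0 !mul0r mulr0.
have hsplit : \sum_(k < n.+2) T n k = \sum_(k < n.+1) T n k + T n n.+1.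
  by rewrite big_ord_recr.
have hG0 : G n 0 = 0 by [].
have IH' := IH (ltnW hn).
move: tel; rewrite hG2 hG0 subr0 sumrB -mulr_sumr hsplit hT0 addr0 IH'.
move=> /eqP; rewrite subr_eq0 => /eqP ->.
by rewrite Wstep.
Qed.
End Dougall.

Section D2.
Variable F : fieldType.
Definition D2 := dual (dual F).
Definition mk4_def (a b c d : F) : D2 := ((a, b), (c, d)).
Fact mk4_key : unit. Proof. by []. Qed.
Definition mk4 := locked_with mk4_key mk4_def.
Canonical mk4_unlockable := [unlockable fun mk4].
Lemma mk4D a b c d a' b' c' d' :
  mk4 a b c d + mk4 a' b' c' d' = mk4 (a+a') (b+b') (c+c') (d+d').
Proof. by rewrite unlock. Qed.
Lemma mk4N a b c d : - mk4 a b c d = mk4 (-a) (-b) (-c) (-d).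
Proof. by rewrite unlock. Qed.
Lemma mk4M a b c d a' b' c' d' :
  mk4 a b c d * mk4 a' b' c' d' =
  mk4 (a*a') (a*b' + b*a') (a*c' + c*a') (a*d' + b*c' + c*b' + d*a').
Proof. by rewrite unlock /mk4_def /GRing.mul /=; congr (_, _); congr (_, _); rewrite /= ?addrA. Qed.
Lemma mk4_1 : (1 : D2) = mk4 1 0 0 0. Proof. by rewrite unlock. Qed.
Lemma mk4_0 : (0 : D2) = mk4 0 0 0 0. Proof. by rewrite unlock. Qed.
Lemma mk4_unit a b c d : (mk4 a b c d \is a GRing.unit) = (a != 0).
Proof. by rewrite unlock -unitfE. Qed.
Lemma mk4_nat n : (n%:R : D2) = mk4 n%:R 0 0 0.
Proof.
elim: n => [|n IH]; first by rewrite unlock.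
by rewrite -natr1 IH mk4_1 mk4D !addr0 natr1.
Qed.
Lemma mk4B a b c d a' b' c' d' :
  mk4 a b c d - mk4 a' b' c' d' = mk4 (a-a') (b-b') (c-c') (d-d').
Proof. by rewrite mk4N mk4D. Qed.
Lemma mk4X r k : (mk4 r 0 0 0)^+k = mk4 (r^+k) 0 0 0.
Proof.
elim: k => [|k IH]; first by rewrite !expr0 mk4_1.
by rewrite !exprS IH mk4M !mulr0 !mul0r !addr0.
Qed.
Lemma mk4V a b c d : a != 0 ->
  (mk4 a b c d)^-1 = mk4 (a^-1) (- (b / a^+2)) (- (c / a^+2))
     (2%:R * b * c / a^+3 - d / a^+2).
Proof.
move=> a0.
have u : mk4 a b c d \is a GRing.unit by rewrite mk4_unit.
have h : mk4 a b c d * mk4 (a^-1) (- (b / a^+2)) (- (c / a^+2))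
     (2%:R * b * c / a^+3 - d / a^+2) = 1.
  rewrite mk4M mk4_1; congr mk4; field; done.
by rewrite -[LHS]mulr1 -h mulrA mulVr // mul1r.
Qed.

Definition Hp (u : F) k := \sum_(i < k) (u + i%:R)^-1.
Definition H2p (u : F) k := \sum_(i < k) ((u + i%:R)^+2)^-1.

Lemma poch_mk4 u v w k : (forall i, (i < k)%N -> u + i%:R != 0) ->
  poch (mk4 u v w 0) k = mk4 (poch u k) (poch u k * v * Hp u k)
     (poch u k * w * Hp u k) (poch u k * v * w * (Hp u k ^+ 2 - H2p u k)).
Proof.
elim: k => [|k IH] h.
  by rewrite !poch0 /Hp /H2p !big_ord0 mk4_1 !mulr0 expr0n /= subr0 mulr0.
rewrite !pochS IH; last by move=> i hi; apply: h; apply: ltnW.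
rewrite mk4_nat mk4D !addr0 mk4M /Hp /H2p !big_ord_recr /=.
have hk := h k (ltnSn k).
congr mk4; field; done.
Qed.
End D2.

Section Help.
Variable F : fieldType.

Lemma gb_poch (z : F) k : gbinom (z + k%:R) k = poch (z + 1) k / (k`!)%:R.
Proof.
rewrite /gbinom /poch; congr (_ / _).
rewrite (reindex_inj rev_ord_inj) /=; apply: eq_bigr => i _.
rewrite /= natrB; last exact: ltn_ord.
by rewrite -natr1; ring.
Qed.

Lemma Hsum_Hp (z : F) m : Hsum m z = Hp (z + 1) m.
Proof.
rewrite /Hsum /Hp big_add1 /= big_mkord; apply: eq_bigr => i _.
by rewrite -natr1; congr (_^-1); ring.
Qed.

Lemma Hsum2_H2p (z : F) m : Hsum2 m z = H2p (z + 1) m.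
Proof.
rewrite /Hsum2 /H2p big_add1 /= big_mkord; apply: eq_bigr => i _.
by rewrite -natr1; congr (_^-1); ring.
Qed.

Lemma Hsum_even (x : F) k : (2%:R : F) != 0 ->
  (forall j, (1 <= j <= 2 * k)%N -> x + j%:R != 0) ->
  2%:R * Hsum (2 * k) x = Hp (x / 2%:R + 1) k + Hp ((x - 1) / 2%:R + 1) k.
Proof.
move=> h2; elim: k => [|k IH] h.
  by rewrite /Hsum /Hp !big_ord0 big_geq // mulr0 addr0.
have e : (2 * k.+1 = (2 * k).+2)%N by lia.
rewrite /Hsum e big_nat_recr //= big_nat_recr //= -/(Hsum (2 * k) x) mulrDr mulrDr IH.
  rewrite /Hp !big_ord_recr /=.
  have h1 := h (2 * k).+1; have h2' := h (2 * k).+2.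
  rewrite -!/(Hp _ k).
  have hh1 : x + (2 * k).+1%:R != 0 by apply: h1; lia.
  have hh2 : x + (2 * k).+2%:R != 0 by apply: h2'; lia.
  set A := Hp (x / 2%:R + 1) k; set B := Hp ((x - 1) / 2%:R + 1) k.
  have q1 : x / 2%:R + 1 + k%:R = (x + (2 * k).+2%:R) / 2%:R.
    by rewrite -[(2 * k).+2]addn2 natrD natrM; field.
  have q2 : (x - 1) / 2%:R + 1 + k%:R = (x + (2 * k).+1%:R) / 2%:R.
    by rewrite -[(2 * k).+1]addn1 natrD natrM; field.
  have hh1' : x + (1 + 2%:R * k%:R) != 0.
    rewrite (_ : 1 + 2%:R * k%:R = (2*k + 1)%:R); last by rewrite natrD natrM addrC.
    by rewrite addn1.
  have hh2' : x + (2%:R + 2%:R * k%:R) != 0.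
    rewrite (_ : 2%:R + 2%:R * k%:R = (2*k + 2)%:R); last by rewrite natrD natrM addrC.
    by rewrite addn2.
  rewrite q1 q2; field; rewrite ?hh1' ?hh2' ?h2 //.
by move=> j hj; apply: h; lia.
Qed.

Lemma poch_cst (u : F) k : poch (mk4 u 0 0 0) k = mk4 (poch u k) 0 0 0.
Proof.
elim: k => [|k IH]; first by rewrite !poch0 mk4_1.
by rewrite !pochS IH mk4_nat mk4D mk4M !addr0 !mulr0 !mul0r !addr0.
Qed.

Lemma poch_neq0 (u : F) k : (forall i, (i < k)%N -> u + i%:R != 0) -> poch u k != 0.
Proof.
move=> h; rewrite /poch; apply/prodf_neq0 => i _; exact: h.
Qed.

Lemma gbinom_fac (z : F) k : gbinom z k != 0 -> forall i, (i < k)%N -> z - i%:R != 0.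
Proof.
move=> h i hi; apply: contra h => /eqP hz.
by rewrite /gbinom (bigD1 (Ordinal hi)) //= hz !mul0r.
Qed.

Lemma st_sum (I : Type) (r : seq I) (P : pred I) (f : I -> D2 F) :
  (\sum_(i <- r | P i) f i).2.2 = \sum_(i <- r | P i) (f i).2.2.
Proof. exact: (big_morph (fun z : D2 F => z.2.2) (fun _ _ => erefl) (erefl _)). Qed.

Lemma mk4_st a b c d : (mk4 a b c d : D2 F).2.2 = d. Proof. by rewrite unlock. Qed.
End Help.

Unset Implicit Arguments. Set Strict Implicit. Set Printing Implicit Defensive.
Local Open Scope complex_scope.

Theorem theorem8 (R : realType) (n : nat) (x : R[i])
  (hbin1 : forall k : nat, (k <= n)%N -> gbinom ((x - 1) / 2%:R + k%:R) k != 0)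
  (hbin2 : forall k : nat, (k <= n)%N ->
     gbinom (x - 2%:R^-1 + n%:R + k%:R) k != 0)
  (hfrac : forall k : nat, (k <= n)%N ->
     1 + 2%:R * x + 2%:R * n%:R + 2%:R * k%:R != 0)
  (hH : forall j : nat, (1 <= j <= 2 * n)%N -> x + j%:R != 0)
  (hHn : forall j : nat, (1 <= j <= n)%N -> (x - 1) / 2%:R + j%:R != 0) :
  \sum_(0 <= k < n.+1)
     (-1) ^+ k * ('C(n, k))%:R
     * ((gbinom (x / 2%:R + k%:R) k) ^+ 2 * gbinom (x - 2%:R^-1 + k%:R) k)
     / ((gbinom ((x - 1) / 2%:R + k%:R) k) ^+ 2
        * gbinom (x - 2%:R^-1 + n%:R + k%:R) k)
     * ((1 + 2%:R * x + 4%:R * k%:R) / (1 + 2%:R * x + 2%:R * n%:R + 2%:R * k%:R))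
     * (Hsum (2 * k) x) ^+ 2
  = 4%:R^-1 * (gbinom (x - 2%:R^-1 + n%:R) n * gbinom (- (3%:R / 2%:R) + n%:R) n)
      / (gbinom ((x - 1) / 2%:R + n%:R) n) ^+ 2
    * ((Hsum n ((x - 1) / 2%:R) - Hsum n (- (3%:R / 2%:R))) ^+ 2
       - Hsum2 n (- (3%:R / 2%:R))).
Proof.
have nat0 : forall m, (0 < m)%N -> (m%:R : R[i]) != 0.
  by move=> m hm; rewrite pnatr_eq0 -lt0n.
have n2 : (2%:R : R[i]) != 0 by apply: nat0.
pose a0 := x - 2%:R^-1 + 1.
pose aN := x - 2%:R^-1 + n%:R + 1.
pose b0 := x / 2%:R + 1.
pose a1 := (x - 1) / 2%:R + 1.
pose e := - (3%:R / 2%:R) + 1 : R[i].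
have fA : forall j, (j <= n)%N -> aN + j%:R != 0.
  move=> j; rewrite leq_eqVlt => /orP [/eqP ->|hj].
    have := hfrac n (leqnn n); apply: contra => /eqP h.
    apply/eqP; rewrite (_ : 1 + 2%:R * x + 2%:R * n%:R + 2%:R * n%:R = 2%:R * (aN + n%:R)).
      by rewrite h mulr0.
    by rewrite /aN; field.
  have := gbinom_fac (hbin2 n (leqnn n)) (i := n - j.+1) _.
  rewrite (_ : x - 2%:R^-1 + n%:R + n%:R - (n - j.+1)%:R = aN + j%:R) //.
    by apply; lia.
  by rewrite natrB // /aN -natr1; ring.
have fB : forall j, (j < n)%N -> a1 + j%:R != 0.
  move=> j hj; have -> : a1 + j%:R = (x-1)/2%:R + j.+1%:R by rewrite /a1 -natr1; ring.
  apply: hHn; lia.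
have fb0 : forall i, (i < n)%N -> b0 + i%:R != 0.
  move=> i hi; have := hH (2 * i.+1) ; rewrite (_ : b0 + i%:R = (x + (2 * i.+1)%:R) / 2%:R).
    move=> h; rewrite mulf_neq0 ?invr_eq0 //; apply: h; lia.
  by rewrite /b0 natrM -natr1; field.
have fe : forall i, e + i%:R != 0.
  move=> i; apply/eqP => h.
  have : ((2 * i)%:R : R[i]) = 1%:R.
    have h2 : 2%:R * (e + i%:R) = (2 * i)%:R - 1 by rewrite /e natrM; field.
    by apply/eqP; rewrite -subr_eq0 -h2 h mulr0.
  by move/eqP; rewrite eqr_nat; lia.
have fd : forall m, (m < n)%N -> e - n%:R + m%:R != 0.
  move=> m hm; apply/eqP => h.
  have : ((2 * m)%:R : R[i]) = (2 * n).+1%:R.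
    have h2 : 2%:R * (e - n%:R + m%:R) = (2 * m)%:R - (2 * n).+1%:R.
      by rewrite -[(2 * n).+1]addn1 natrD !natrM /e; field.
    by apply/eqP; rewrite -subr_eq0 -h2 h mulr0.
  by move/eqP; rewrite eqr_nat; lia.
pose al := mk4 aN 0 0 0.
pose be := mk4 (b0 + n%:R) 0 1 0.
pose ga := mk4 (b0 + n%:R) 1 0 0.
have eA : al - n%:R = mk4 a0 0 0 0.
  by rewrite /al mk4_nat mk4B !subr0 /aN /a0; congr mk4; ring.
have eB : be - n%:R = mk4 b0 0 1 0 by rewrite /be mk4_nat mk4B !subr0 addrK.
have eC : ga - n%:R = mk4 b0 1 0 0 by rewrite /ga mk4_nat mk4B !subr0 addrK.
have eAB : 1 + al - be = mk4 a1 0 (-1) 0.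
  rewrite /al /be mk4_1 mk4D mk4B; congr mk4; try ring.
  by rewrite /aN /b0 /a1; field.
have eAC : 1 + al - ga = mk4 a1 (-1) 0 0.
  rewrite /al /ga mk4_1 mk4D mk4B; congr mk4; try ring.
  by rewrite /aN /b0 /a1; field.
have eABC0 : 1 + al - be - ga = mk4 (e - n%:R) (-1) (-1) 0.
  rewrite /al /be /ga mk4_1 !mk4D !mk4B; congr mk4; try ring.
  by rewrite /aN /b0 /e; field.
have ha' : forall j, (j <= n)%N -> al + j%:R \is a GRing.unit.
  by move=> j hj; rewrite /al mk4_nat mk4D mk4_unit fA.
have hb' : forall j, (j < n)%N -> 1 + al - be + j%:R \is a GRing.unit.
  by move=> j hj; rewrite eAB mk4_nat mk4D mk4_unit fB.
have hc' : forall j, (j < n)%N -> 1 + al - ga + j%:R \is a GRing.unit.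
  by move=> j hj; rewrite eAC mk4_nat mk4D mk4_unit fB.
have hd' : forall m, (m < n)%N -> 1 + al - be - ga + m%:R \is a GRing.unit.
  by move=> m hm; rewrite eABC0 mk4_nat mk4D mk4_unit fd.
have hk' : forall k, (0 < k)%N -> (k%:R : D2 R[i]) \is a GRing.unit.
  by move=> k hk; rewrite mk4_nat mk4_unit nat0.
have hD := dougall ha' hb' hc' hd' hk' (leqnn n).
have stT : forall k, (k <= n)%N -> (T al be ga n k).2.2 =
   4%:R * ((-1) ^+ k * ('C(n, k))%:R
     * ((gbinom (x / 2%:R + k%:R) k) ^+ 2 * gbinom (x - 2%:R^-1 + k%:R) k)
     / ((gbinom ((x - 1) / 2%:R + k%:R) k) ^+ 2
        * gbinom (x - 2%:R^-1 + n%:R + k%:R) k)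
     * ((1 + 2%:R * x + 4%:R * k%:R) / (1 + 2%:R * x + 2%:R * n%:R + 2%:R * k%:R))
     * (Hsum (2 * k) x) ^+ 2).
  move=> k hk.
  have hb0k : forall i, (i < k)%N -> b0 + i%:R != 0.
    by move=> i hi; apply: fb0; apply: leq_trans hi hk.
  have ha1k : forall i, (i < k)%N -> a1 + i%:R != 0.
    by move=> i hi; apply: fB; apply: leq_trans hi hk.
  rewrite /T /U eA eB eC eAB eAC /al !poch_cst (poch_mk4 _ _ hb0k) (poch_mk4 _ _ hb0k).
  rewrite (poch_mk4 _ _ ha1k) (poch_mk4 _ _ ha1k) !mk4_nat mk4_1 mk4N !oppr0 mk4X.
  rewrite !(mk4M, mk4D) !(mulr0, mul0r, addr0, add0r, mulr1, mul1r).
  have pA : poch aN k != 0 by apply: poch_neq0 => i hi; apply: fA; lia.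
  have aNk : aN + k%:R != 0 by apply: fA.
  have pA1 : poch aN k.+1 != 0 by rewrite pochS mulf_neq0.
  have p1 : poch a1 k != 0 by apply: poch_neq0.
  have fk : (k`!)%:R != 0 :> R[i] by apply: nat0; apply: fact_gt0.
  rewrite mk4V; last by rewrite !mulf_neq0.
  rewrite !mk4M mk4_st.
  rewrite !gb_poch -/a0 -/aN -/b0 -/a1.
  have hjk : forall j, (1 <= j <= 2 * k)%N -> x + j%:R != 0.
    by move=> j hj; apply: hH; lia.
  have hs := Hsum_even n2 hjk.
  rewrite -/b0 -/a1 in hs.
  have -> : Hsum (2 * k) x = (Hp b0 k + Hp a1 k) / 2%:R by rewrite -hs; field.
  have -> : 1 + 2%:R * x + 4%:R * k%:R = 2%:R * (a0 + 2%:R * k%:R) by rewrite /a0; field.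
  have -> : 1 + 2%:R * x + 2%:R * n%:R + 2%:R * k%:R = 2%:R * (aN + k%:R) by rewrite /aN; field.
  rewrite pochS.
  clearbody a0 aN b0 a1.
  by field; rewrite aNk fk pA p1.
have stW : (W al be ga n).2.2 = 4%:R * (4%:R^-1 * (gbinom (x - 2%:R^-1 + n%:R) n * gbinom (- (3%:R / 2%:R) + n%:R) n)
      / (gbinom ((x - 1) / 2%:R + n%:R) n) ^+ 2
    * ((Hsum n ((x - 1) / 2%:R) - Hsum n (- (3%:R / 2%:R))) ^+ 2
       - Hsum2 n (- (3%:R / 2%:R)))).
  have ha1n : forall i, (i < n)%N -> a1 + i%:R != 0 by move=> i hi; apply: fB.
  have hen : forall i, (i < n)%N -> e + i%:R != 0 by move=> i _; apply: fe.
  have p1 : poch a1 n != 0 by apply: poch_neq0.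
  have fk : (n`!)%:R != 0 :> R[i] by apply: nat0; apply: fact_gt0.
  rewrite /W eA eABC0 eAB eAC mk4_nat mk4D subrK !addr0 !poch_cst (poch_mk4 _ _ hen).
  rewrite (poch_mk4 _ _ ha1n) (poch_mk4 _ _ ha1n).
  rewrite !(mk4M, mk4D) !(mulr0, mul0r, addr0, add0r, mulr1, mul1r).
  rewrite mk4V; last by rewrite !mulf_neq0.
  rewrite !mk4M mk4_st.
  rewrite !gb_poch !Hsum_Hp Hsum2_H2p -/a0 -/a1 -/e.
  clearbody a0 aN b0 a1 e.
  by field; rewrite ?fk ?p1.
have hD2 : (\sum_(k < n.+1) T al be ga n k).2.2 = (W al be ga n).2.2 by rewrite hD.
rewrite st_sum stW (eq_bigr _ (fun (k : 'I_n.+1) _ => stT k (leq_ord k))) -mulr_sumr in hD2.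
rewrite big_mkord; apply: (mulfI (_ : 4%:R != 0 :> R[i])); first exact: nat0.
exact: hD2.
Qed.
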